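(* Let $\mathcal M=(M,<,+,0,\ldots)$ be a definably complete locally o-minimal expansion of an ordered abelian group. Let $C\subseteq M^m$ be a definable, closed and bounded set, let $s\in M$ with $s>0$, and let $\{f_t:C\to M\}_{0<t<s}$ be a definable family of functions which is pointwise convergent and is a definable family of equi-continuous functions. Then the family $\{f_t\}_{0<t<s}$ is uniformly convergent.
   Context: ''Definable'' means definable in $\mathcal M$ with parameters. $\mathcal M$ is definably complete if every definable subset of $M$ has a supremum and an infimum in $M\cup\{\pm\infty\}$; it is locally o-minimal if for every definable $X\subseteq M$ and every $a\in M$ there is an open interval $I\ni a$ such that $X\cap I$ is a finite union of points and open intervals. For $x=(x_1,\dots,x_n)\in M^n$, $|x|:=\max_i |x_i|$; $M^n$ carries the product of the order topology. A definable family of functions $\{f_t:C\to M\}_{0<t<s}$ means there is a definable $F:C\times(0,s)\to M$ with $f_t(x)=F(x,t)$. It is a family of equi-continuous functions if for all $\varepsilon>0$ and all $x\in C$ there is $\delta>0$ such that for all $t\in(0,s)$ and all $x'\in C$ with $|x-x'|<\delta$ we have $|F(x,t)-F(x',t)|<\varepsilon$. It is pointwise convergent if for every $\varepsilon>0$ and $x\in C$ there is $s'>0$ with $|f_t(x)-f_{t'}(x)|<\varepsilon$ for all $t,t'\in(0,s')$. It is uniformly convergent if for every $\varepsilon>0$ there is $s'>0$ with $|f_t(x)-f_{t'}(x)|<\varepsilon$ for all $x\in C$ and all $t,t'\in(0,s')$. *)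

(* Defs.v *)
From mathcomp Require Import all_boot all_algebra.
Set Implicit Arguments. Unset Strict Implicit. Unset Printing Implicit Defensive.
Import GRing.Theory.
Local Open Scope ring_scope.

Definition ordered_abelian_group (M : zmodType) (lt : M -> M -> Prop) : Prop :=
  [/\ (forall x, ~ lt x x),
      (forall x y z, lt x y -> lt y z -> lt x z),
      (forall x y, [\/ lt x y, x = y | lt y x]) &
      (forall x y z, lt x y -> lt (x + z) (y + z))].

Definition le_of (M : zmodType) (lt : M -> M -> Prop) (x y : M) : Prop :=
  lt x y \/ x = y.

Definition abs_lt (M : zmodType) (lt : M -> M -> Prop) (x e : M) : Prop :=
  lt x e /\ lt (- x) e.

(* |x| < e for x in M^n, where |x| = max_i |x_i| *)
Definition vabs_lt (M : zmodType) (lt : M -> M -> Prop) (n : nat)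
  (x : 'I_n -> M) (e : M) : Prop := forall i, abs_lt lt (x i) e.

(* Extra (non-logical) symbols of the expansion, beyond <, +, 0. *)
Record language := Language {
  fsym : Type; farity : fsym -> nat;
  rsym : Type; rarity : rsym -> nat }.

Record interp (L : language) (M : Type) := Interp {
  ifun : forall f : fsym L, ('I_(farity f) -> M) -> M;
  irel : forall r : rsym L, ('I_(rarity r) -> M) -> Prop }.

Inductive term (L : language) : Type :=
  | TVar : nat -> term L
  | TZero : term L
  | TAdd : term L -> term L -> term L
  | TApp : forall f : fsym L, ('I_(farity f) -> term L) -> term L.

Inductive formula (L : language) : Type :=
  | FEq : term L -> term L -> formula L
  | FLt : term L -> term L -> formula L
  | FRel : forall r : rsym L, ('I_(rarity r) -> term L) -> formula L
  | FNot : formula L -> formula L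
  | FAnd : formula L -> formula L -> formula L
  | FEx : nat -> formula L -> formula L.

Section Semantics.
Variables (L : language) (M : zmodType) (lt : M -> M -> Prop) (I : interp L M).

Fixpoint teval (v : nat -> M) (t : term L) : M :=
  match t with
  | TVar i => v i
  | TZero => 0
  | TAdd t1 t2 => teval v t1 + teval v t2
  | TApp f ts => ifun I (fun j => teval v (ts j))
  end.

Definition upd (v : nat -> M) (i : nat) (a : M) : nat -> M :=
  fun j => if j == i then a else v j.

Fixpoint sat (v : nat -> M) (phi : formula L) : Prop :=
  match phi with
  | FEq t1 t2 => teval v t1 = teval v t2
  | FLt t1 t2 => lt (teval v t1) (teval v t2)
  | FRel r ts => irel I (fun j => teval v (ts j))
  | FNot p => ~ sat v p
  | FAnd p q => sat v p /\ sat v q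
  | FEx i p => exists a, sat (upd v i a) p
  end.

(* environment: variables 0..n-1 get x, variables n..n+k-1 get parameters p *)
Definition env (n k : nat) (x : 'I_n -> M) (p : 'I_k -> M) : nat -> M :=
  fun i => match insub i with
           | Some j => x j
           | None => oapp p 0 (insub (i - n)%N)
           end.

Definition definable (n : nat) (X : ('I_n -> M) -> Prop) : Prop :=
  exists (phi : formula L) (k : nat) (p : 'I_k -> M),
    forall x, X x <-> sat (env x p) phi.

Definition definable1 (X : M -> Prop) : Prop :=
  definable (fun v : 'I_1 -> M => X (v ord0)).

(* open interval with endpoints in M ∪ {±∞}; None = -∞ (lower) / +∞ (upper) *)
Definition in_oint (l u : option M) (x : M) : Prop :=
  (if l is Some b then lt b x else True) /\ (if u is Some c then lt x c else True).

Definition is_lub (X : M -> Prop) (u : M) : Prop :=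
  (forall x, X x -> le_of lt x u) /\
  (forall b, (forall x, X x -> le_of lt x b) -> le_of lt u b).
Definition is_glb (X : M -> Prop) (u : M) : Prop :=
  (forall x, X x -> le_of lt u x) /\
  (forall b, (forall x, X x -> le_of lt b x) -> le_of lt b u).

(* sup X exists in M ∪ {±∞}: -∞ if X = ∅, +∞ if X has no upper bound in M *)
Definition has_sup_ext (X : M -> Prop) : Prop :=
  (forall x, ~ X x) \/ (forall b, exists x, X x /\ lt b x) \/ (exists u, is_lub X u).
Definition has_inf_ext (X : M -> Prop) : Prop :=
  (forall x, ~ X x) \/ (forall b, exists x, X x /\ lt x b) \/ (exists u, is_glb X u).

Definition definably_complete : Prop :=
  forall X : M -> Prop, definable1 X -> has_sup_ext X /\ has_inf_ext X.

Inductive piece := Pt of M | Oint of option M & option M.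
Definition in_piece (q : piece) (x : M) : Prop :=
  match q with Pt a => x = a | Oint l u => in_oint l u x end.

Definition locally_o_minimal : Prop :=
  forall X : M -> Prop, definable1 X -> forall a : M,
    exists l u : option M, in_oint l u a /\
      exists s : seq piece, forall x,
        (X x /\ in_oint l u x) <-> (exists2 i, (i < size s)%N & in_piece (nth (Pt 0) s i) x).


Definition closed_set (n : nat) (C : ('I_n -> M) -> Prop) : Prop :=
  forall x, ~ C x -> exists l u : 'I_n -> option M,
    (forall i, in_oint (l i) (u i) (x i)) /\
    (forall y, (forall i, in_oint (l i) (u i) (y i)) -> ~ C y).

Definition bounded_set (n : nat) (C : ('I_n -> M) -> Prop) : Prop :=
  exists R : M, forall x, C x -> forall i, le_of lt (x i) R /\ le_of lt (- x i) R.

Definition definable_family (m : nat) (C : ('I_m -> M) -> Prop) (s : M)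
  (F : ('I_m -> M) -> M -> M) : Prop :=
  definable (fun z : 'I_(m + 2) -> M =>
    let x := fun i => z (lshift 2 i) in
    let t := z (rshift m (ord0 : 'I_2)) in
    let y := z (rshift m (ord_max : 'I_2)) in
    [/\ C x, lt 0 t, lt t s & y = F x t]).

Definition equicontinuous_family (m : nat) (C : ('I_m -> M) -> Prop) (s : M)
  (F : ('I_m -> M) -> M -> M) : Prop :=
  forall eps, lt 0 eps -> forall x, C x -> exists delta, lt 0 delta /\
    forall t x', lt 0 t -> lt t s -> C x' -> vabs_lt lt (fun i => x i - x' i) delta ->
      abs_lt lt (F x t - F x' t) eps.

Definition pointwise_convergent (m : nat) (C : ('I_m -> M) -> Prop) (s : M)
  (F : ('I_m -> M) -> M -> M) : Prop :=
  forall eps, lt 0 eps -> forall x, C x -> exists s', lt 0 s' /\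
    forall t t', lt 0 t -> lt t s' -> lt t s -> lt 0 t' -> lt t' s' -> lt t' s ->
      abs_lt lt (F x t - F x t') eps.

Definition uniformly_convergent (m : nat) (C : ('I_m -> M) -> Prop) (s : M)
  (F : ('I_m -> M) -> M -> M) : Prop :=
  forall eps, lt 0 eps -> exists s', lt 0 s' /\
    forall x t t', C x -> lt 0 t -> lt t s' -> lt t s -> lt 0 t' -> lt t' s' -> lt t' s ->
      abs_lt lt (F x t - F x t') eps.

End Semantics.

(* Main.v *)
Require Import Defs.
From mathcomp Require Import all_boot all_algebra.
From Stdlib Require Import FunctionalExtensionality Classical.
Set Implicit Arguments. Unset Strict Implicit. Unset Printing Implicit Defensive.
Import GRing.Theory.
From mathcomp Require Import zify.
Local Open Scope ring_scope.

Section Ord.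
Variables (M : zmodType) (lt : M -> M -> Prop).
Hypothesis HM : ordered_abelian_group lt.
Local Notation le := (le_of lt).

Lemma ltxx x : ~ lt x x. Proof. by case: HM. Qed.
Lemma lt_trans x y z : lt x y -> lt y z -> lt x z. Proof. by case: HM => _ h _ _; apply: h. Qed.
Lemma trich x y : [\/ lt x y, x = y | lt y x]. Proof. by case: HM => _ _ h _; apply: h. Qed.
Lemma ltDr x y z : lt x y -> lt (x + z) (y + z). Proof. by case: HM => _ _ _ h; apply: h. Qed.
Lemma ltDl x y z : lt x y -> lt (z + x) (z + y).
Proof. by move=> h; rewrite ![z + _]addrC; apply: ltDr. Qed.
Lemma ltDr_iff x y z : lt (x + z) (y + z) <-> lt x y.
Proof. split; last exact: ltDr. by move=> /(ltDr (-z)); rewrite !addrK. Qed.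
Lemma lt_asym x y : lt x y -> ~ lt y x.
Proof. by move=> h1 h2; apply: (@ltxx x); apply: lt_trans h1 h2. Qed.
Lemma lt_le_trans x y z : lt x y -> le y z -> lt x z.
Proof. by move=> h [h'|<-] //; apply: lt_trans h h'. Qed.
Lemma le_lt_trans x y z : le x y -> lt y z -> lt x z.
Proof. by move=> [h|->] h' //; apply: lt_trans h h'. Qed.
Lemma le_trans x y z : le x y -> le y z -> le x z.
Proof. by move=> [h|->] // h'; left; apply: lt_le_trans h h'. Qed.
Lemma le_refl x : le x x. Proof. by right. Qed.
Lemma not_lt x y : ~ lt x y -> le y x.
Proof. by case: (trich x y) => [h|->|h] n; [case: n|right|left]. Qed.
Lemma not_le x y : ~ le x y -> lt y x.
Proof. by case: (trich x y) => [h|->|h] n //; case: n; [left|right]. Qed.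
Lemma le_not_lt x y : le x y -> ~ lt y x.
Proof. by move=> [h|->]; [apply: lt_asym|apply: ltxx]. Qed.
Lemma lt_not_le x y : lt x y -> ~ le y x.
Proof. by move=> h [h'|e]; [apply: (lt_asym h h')|subst; apply: (ltxx h)]. Qed.
Lemma lt_opp x y : lt x y -> lt (- y) (- x).
Proof.
move=> /(ltDr (- x - y)).
have -> : x + (- x - y) = - y by rewrite addrA addrN add0r.
by rewrite addrC subrK.
Qed.
Lemma lt_add2 a b c d : lt a b -> lt c d -> lt (a + c) (b + d).
Proof. by move=> h1 h2; apply: lt_trans (ltDr c h1) (ltDl b h2). Qed.
Lemma le_add2 a b c d : le a b -> le c d -> le (a + c) (b + d).
Proof.
move=> [h1|->] [h2|->].
- by left; apply: lt_add2.
- by left; apply: ltDr.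
- by left; apply: ltDl.
- by right.
Qed.
Lemma lt_subr x y : lt 0 (y - x) <-> lt x y.
Proof. by rewrite -(ltDr_iff _ _ x) add0r subrK. Qed.

Lemma ex_min a b : exists c, le c a /\ le c b /\ (c = a \/ c = b).
Proof.
case: (trich a b) => [h|->|h].
- by exists a; split; [right|split; [left|left]].
- by exists b; split; [right|split; [right|left]].
- by exists b; split; [left|split; [right|right]].
Qed.
Lemma ex_min_pos a b : lt 0 a -> lt 0 b -> exists c, lt 0 c /\ le c a /\ le c b.
Proof.
move=> ha hb; case: (ex_min a b) => c [h1 [h2 [E|E]]]; exists c; by rewrite E in h1 h2 *.
Qed.

Lemma abs_ltN x e : abs_lt lt (- x) e <-> abs_lt lt x e.
Proof. by rewrite /abs_lt opprK; split=> -[]. Qed.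
Lemma abs_lt_le x e e' : abs_lt lt x e -> le e e' -> abs_lt lt x e'.
Proof. by move=> [h1 h2] h; split; apply: lt_le_trans h. Qed.
Lemma abs_lt_pos x e : abs_lt lt x e -> lt 0 e.
Proof.
move=> [h1 h2]; case: (trich x 0) => [h|E|h].
- by apply: lt_trans h2; rewrite -oppr0; apply: lt_opp.
- by move: h2; rewrite E oppr0.
- by apply: lt_trans h1.
Qed.
Lemma abs_lt_sub x y e : abs_lt lt (x - y) e <-> abs_lt lt (y - x) e.
Proof. by rewrite -abs_ltN opprB. Qed.

Lemma half_lemma eps : lt 0 eps -> exists e, lt 0 e /\
  forall a b, abs_lt lt a e -> abs_lt lt b e -> abs_lt lt (a + b) eps.
Proof.
move=> he.
have gen : forall e, lt 0 e -> le (e + e) eps -> forall a b,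
    abs_lt lt a e -> abs_lt lt b e -> abs_lt lt (a + b) eps.
  move=> e _ hle a b [ha1 ha2] [hb1 hb2]; split.
    by apply: lt_le_trans (lt_add2 ha1 hb1) hle.
  by rewrite opprD; apply: lt_le_trans (lt_add2 ha2 hb2) hle.
case: (classic (exists d, lt 0 d /\ lt d eps)) => [[d [hd0 hd]]|nd].
  case: (classic (le (d + d) eps)) => hdd.
    by exists d; split => //; apply: gen.
  have hed : lt 0 (eps - d) by apply/lt_subr.
  case: (ex_min_pos hd0 hed) => e [he0 [h1 h2]].
  exists e; split => //; apply: gen => //.
  by apply: (le_trans (le_add2 h1 h2)); rewrite addrC subrK; right.
exists eps; split => // a b ha hb.
have z : forall x, abs_lt lt x eps -> x = 0.
  move=> x [h1 h2]; case: (trich x 0) => [h|//|h].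
    by case: nd; exists (- x); split => //; rewrite -oppr0; apply: lt_opp.
  by case: nd; exists x.
by rewrite (z a ha) (z b hb) addr0; split; rewrite ?oppr0.
Qed.

Lemma three_lemma eps : lt 0 eps -> exists e, lt 0 e /\
  forall a b c, abs_lt lt a e -> abs_lt lt b e -> abs_lt lt c e ->
    abs_lt lt (a + b + c) eps.
Proof.
move=> he; case: (half_lemma he) => e1 [he1 H1].
case: (half_lemma he1) => e2 [he2 H2].
case: (ex_min_pos he1 he2) => e [he0 [h1 h2]].
exists e; split => // a b c ha hb hc; apply: H1; last exact: abs_lt_le hc h1.
by apply: H2; apply: abs_lt_le h2.
Qed.

End Ord.
Lemma half_dS n : (n.*2.+1)./2 = n.
Proof. by rewrite /= uphalf_double. Qed.
Lemma half_d n : (n.*2)./2 = n.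
Proof. exact: doubleK. Qed.
Lemma odd_dS n : odd (n.*2.+1). Proof. by rewrite /= odd_double. Qed.

Section Dfn.
Variables (L : language) (M : zmodType) (lt : M -> M -> Prop) (I : interp L M).

Fixpoint trn (r : nat -> nat) (t : term L) : term L :=
  match t with
  | TVar i => TVar L (r i)
  | TZero => TZero L
  | TAdd a b => TAdd (trn r a) (trn r b)
  | @TApp _ f ts => @TApp L f (fun j => trn r (ts j))
  end.

Fixpoint frn (r : nat -> nat) (phi : formula L) : formula L :=
  match phi with
  | FEq a b => FEq (trn r a) (trn r b)
  | FLt a b => FLt (trn r a) (trn r b)
  | @FRel _ R ts => @FRel L R (fun j => trn r (ts j))
  | FNot p => FNot (frn r p)
  | FAnd p q => FAnd (frn r p) (frn r q)
  | FEx i p => FEx (r i) (frn r p)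
  end.

Lemma teval_rn r v t : teval I v (trn r t) = teval I (v \o r) t.
Proof.
elim: t => //= [a IHa b IHb|f ts IH]; first by rewrite IHa IHb.
by congr (ifun I _); apply: functional_extensionality => j; rewrite IH.
Qed.

Lemma sat_rn r : injective r -> forall phi v,
  sat lt I v (frn r phi) <-> sat lt I (v \o r) phi.
Proof.
move=> inj_r; elim=> /=.
- by move=> a b v; rewrite !teval_rn.
- by move=> a b v; rewrite !teval_rn.
- move=> R ts v.
  have -> : (fun j => teval I v (trn r (ts j))) = (fun j => teval I (v \o r) (ts j)).
    by apply: functional_extensionality => j; rewrite teval_rn.
  by [].
- by move=> p IH v; rewrite IH.
- by move=> p IHp q IHq v; rewrite IHp IHq.
- move=> i p IH v; split=> -[a Ha]; exists a; move: Ha; rewrite IH;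
  have -> : upd v (r i) a \o r = upd (v \o r) i a; try by [].
  all: by apply: functional_extensionality => j; rewrite /upd /= (inj_eq inj_r).
Qed.

Fixpoint tbound (t : term L) : nat :=
  match t with
  | TVar i => i.+1
  | TZero => 0
  | TAdd a b => maxn (tbound a) (tbound b)
  | @TApp _ f ts => \max_j tbound (ts j)
  end%N.

Fixpoint fbound (phi : formula L) : nat :=
  match phi with
  | FEq a b => maxn (tbound a) (tbound b)
  | FLt a b => maxn (tbound a) (tbound b)
  | @FRel _ R ts => \max_j tbound (ts j)
  | FNot p => fbound p
  | FAnd p q => maxn (fbound p) (fbound q)
  | FEx i p => maxn i.+1 (fbound p)
  end%N.

Lemma teval_co t v w : (forall i, (i < tbound t)%N -> v i = w i) ->
  teval I v t = teval I w t.
Proof.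
elim: t => //= [i H|a IHa b IHb H|f ts IH H]; first by rewrite H.
- rewrite IHa ?IHb // => i Hi; apply: H; rewrite leq_max Hi ?orbT //.
- congr (ifun I _); apply: functional_extensionality => j; apply: IH => i Hi.
  apply: H; apply: leq_trans Hi _; exact: (leq_bigmax j).
Qed.

Lemma sat_co phi v w : (forall i, (i < fbound phi)%N -> v i = w i) ->
  sat lt I v phi <-> sat lt I w phi.
Proof.
elim: phi v w => /=.
- move=> a b v w H.
  have Ha : forall i, (i < tbound a)%N -> v i = w i.
    by move=> i Hi; apply: H; rewrite leq_max Hi.
  have Hb : forall i, (i < tbound b)%N -> v i = w i.
    by move=> i Hi; apply: H; rewrite leq_max Hi orbT.
  by rewrite (teval_co Ha) (teval_co Hb).
- move=> a b v w H.
  have Ha : forall i, (i < tbound a)%N -> v i = w i.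
    by move=> i Hi; apply: H; rewrite leq_max Hi.
  have Hb : forall i, (i < tbound b)%N -> v i = w i.
    by move=> i Hi; apply: H; rewrite leq_max Hi orbT.
  by rewrite (teval_co Ha) (teval_co Hb).
- move=> R ts v w H.
  suff -> : (fun j => teval I v (ts j)) = (fun j => teval I w (ts j)) by [].
  apply: functional_extensionality => j; apply: teval_co => i Hi.
  apply: H; apply: leq_trans Hi _; exact: (leq_bigmax j).
- by move=> p IH v w H; rewrite (IH v w).
- move=> p IHp q IHq v w H.
  have Ha : forall i, (i < fbound p)%N -> v i = w i.
    by move=> i Hi; apply: H; rewrite leq_max Hi.
  have Hb : forall i, (i < fbound q)%N -> v i = w i.
    by move=> i Hi; apply: H; rewrite leq_max Hi orbT.
  by rewrite (IHp v w Ha) (IHq v w Hb).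
- move=> i p IH v w H.
  have E : forall a j, (j < fbound p)%N -> upd v i a j = upd w i a j.
    by move=> a j Hj; rewrite /upd; case: eqP => // _; rewrite H // leq_max Hj orbT.
  by split=> -[a Ha]; exists a; move: Ha; rewrite (IH _ _ (E a)).
Qed.

Definition il (v q : nat -> M) : nat -> M :=
  fun i => if odd i then q i./2 else v i./2.

Definition Dfn (P : (nat -> M) -> Prop) : Prop :=
  exists phi q, forall v, P v <-> sat lt I (il v q) phi.

Definition rho (f g : nat -> nat) (i : nat) : nat :=
  if odd i then (f i./2).*2.+1 else (g i./2).*2.

Lemma rho_inj f g : injective f -> injective g -> injective (rho f g).
Proof.
move=> hf hg i j; rewrite /rho.
case: (boolP (odd i)) => oi; case: (boolP (odd j)) => oj.
- case=> /double_inj /hf hij.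
  by rewrite -[i]odd_double_half -[j]odd_double_half oi oj hij.
- by move=> E; move: (odd_dS (f i./2)); rewrite E odd_double.
- by move=> E; move: (odd_dS (f j./2)); rewrite -E odd_double.
- move=> /double_inj /hg hij.
  by rewrite -[i]odd_double_half -[j]odd_double_half (negbTE oi) (negbTE oj) hij.
Qed.

Lemma il_rho f g v q : il v q \o rho f g = il (v \o g) (q \o f).
Proof.
apply: functional_extensionality => i; rewrite /il /rho /=.
case: (odd i); first by rewrite odd_dS half_dS.
by rewrite odd_double half_d.
Qed.

Lemma sat_rho f g phi v q : injective f -> injective g ->
  sat lt I (il v q) (frn (rho f g) phi) <-> sat lt I (il (v \o g) (q \o f)) phi.
Proof. by move=> hf hg; rewrite sat_rn ?il_rho //; exact: rho_inj. Qed.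

Lemma Dfn_ext P Q : (forall v, P v <-> Q v) -> Dfn P -> Dfn Q.
Proof. by move=> H [phi [q Hq]]; exists phi, q => v; rewrite -H. Qed.

Lemma Dfn_not P : Dfn P -> Dfn (fun v => ~ P v).
Proof. by move=> [phi [q Hq]]; exists (FNot phi), q => v /=; rewrite Hq. Qed.

Lemma Dfn_and P Q : Dfn P -> Dfn Q -> Dfn (fun v => P v /\ Q v).
Proof.
move=> [phi1 [q1 H1]] [phi2 [q2 H2]].
have i1 : injective (fun j => j.*2) by exact: double_inj.
have i2 : injective (fun j => j.*2.+1) by move=> a b [] /double_inj.
exists (FAnd (frn (rho (fun j => j.*2) id) phi1) (frn (rho (fun j => j.*2.+1) id) phi2)).
exists (fun i => if odd i then q2 i./2 else q1 i./2) => v /=.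
rewrite !sat_rho // H1 H2.
have -> : (fun i => if odd i then q2 i./2 else q1 i./2) \o (fun j => j.*2) = q1.
  by apply: functional_extensionality => j /=; rewrite odd_double half_d.
have -> : (fun i => if odd i then q2 i./2 else q1 i./2) \o (fun j => j.*2.+1) = q2.
  by apply: functional_extensionality => j /=; rewrite odd_double uphalf_double.
by [].
Qed.

Lemma Dfn_or P Q : Dfn P -> Dfn Q -> Dfn (fun v => P v \/ Q v).
Proof.
move=> HP HQ; apply: (Dfn_ext _ (Dfn_not (Dfn_and (Dfn_not HP) (Dfn_not HQ)))).
move=> v; split; first by move=> H; apply: NNPP => -[]; move=> *; tauto.
by tauto.
Qed.

Lemma Dfn_imp P Q : Dfn P -> Dfn Q -> Dfn (fun v => P v -> Q v).
Proof.
move=> HP HQ; apply: (Dfn_ext _ (Dfn_or (Dfn_not HP) HQ)) => v.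
by split; [case=> H1 H2 //; case: (H1 H2)| move=> H; case: (classic (P v)); auto].
Qed.

Lemma Dfn_ren (g : nat -> nat) P : injective g -> Dfn P -> Dfn (fun v => P (v \o g)).
Proof.
move=> hg [phi [q Hq]]; exists (frn (rho id g) phi), q => v.
by rewrite sat_rho //; apply: Hq.
Qed.

Lemma Dfn_ex j P : Dfn P -> Dfn (fun v => exists a, P (upd v j a)).
Proof.
move=> [phi [q Hq]]; exists (FEx j.*2 phi), q => v /=.
have E : forall a, upd (il v q) j.*2 a = il (upd v j a) q.
  move=> a; apply: functional_extensionality => i; rewrite /upd /il.
  case: (boolP (odd i)) => oi.
    by case: eqP => // Ei; move: oi; rewrite Ei odd_double.
  rewrite -{1}[i]odd_double_half (negbTE oi) add0n (inj_eq double_inj) //.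
by split=> -[a Ha]; exists a; [rewrite E -Hq | rewrite Hq -E].
Qed.

Lemma Dfn_eq i j : Dfn (fun v => v i = v j).
Proof.
exists (FEq (TVar L i.*2) (TVar L j.*2)), (fun _ => 0) => v /=.
by rewrite /il !odd_double !half_d.
Qed.

Lemma Dfn_lt i j : Dfn (fun v => lt (v i) (v j)).
Proof.
exists (FLt (TVar L i.*2) (TVar L j.*2)), (fun _ => 0) => v /=.
by rewrite /il !odd_double !half_d.
Qed.

Lemma Dfn_add i j k : Dfn (fun v => v i + v j = v k).
Proof.
exists (FEq (TAdd (TVar L i.*2) (TVar L j.*2)) (TVar L k.*2)), (fun _ => 0) => v /=.
by rewrite /il !odd_double !half_d.
Qed.

Lemma Dfn_cst i c : Dfn (fun v => v i = c).
Proof.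
exists (FEq (TVar L i.*2) (TVar L 1)), (fun _ => c) => v /=.
by rewrite /il !odd_double !half_d.
Qed.


Lemma Dfn_of_definable n (X : ('I_n -> M) -> Prop) (sg : 'I_n -> nat) :
  injective sg -> definable lt I X -> Dfn (fun v => X (fun j => v (sg j))).
Proof.
move=> hsg [phi [k [p Hp]]].
pose se i := if @insub nat (fun x => (x < n)%N) 'I_n i is Some j then sg j else 0%N.
pose r i := if (i < n)%N then (se i).*2 else ((i - n).*2).+1.
have hse : forall i (Hi : (i < n)%N), se i = sg (Ordinal Hi).
  by move=> i Hi; rewrite /se insubT.
have rinj : injective r.
  move=> i j; rewrite /r; case: ltnP => Hi; case: ltnP => Hj.
  - move=> /double_inj; rewrite (hse _ Hi) (hse _ Hj) => /hsg [] //.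
  - by move=> E; move: (odd_dS (j - n)); rewrite -E odd_double.
  - by move=> E; move: (odd_dS (i - n)); rewrite E odd_double.
  - case=> /double_inj E; rewrite -(subnK Hi) -(subnK Hj) E //.
exists (frn r phi), (fun j => oapp p 0 (insub j)) => v.
rewrite sat_rn // Hp.
suff -> : env (fun j => v (sg j)) p = il v (fun j => oapp p 0 (insub j)) \o r by [].
apply: functional_extensionality => i; rewrite /env /r /il /=.
case: ltnP => Hi.
  by rewrite odd_double half_d (hse _ Hi) insubT.
by rewrite odd_dS half_dS insubF // ltnNge Hi.
Qed.

Lemma definable1_of_Dfn (X : M -> Prop) : Dfn (fun v => X (v 0%N)) -> definable1 lt I X.
Proof.
move=> [phi [q Hq]].
exists phi, (fbound phi), (fun t : 'I_(fbound phi) => il (fun _ => 0) q t.+1) => x.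
pose w := fun j : nat => if j == 0%N then x ord0 else 0.
rewrite /= (Hq w) /w /=.
apply: sat_co => i Hi; rewrite /env.
case: i Hi => [|t] Ht.
  by rewrite /il /= insubT /=; congr x; apply: val_inj.
have Ht' : (t < fbound phi)%N := ltnW Ht.
rewrite insubF //= subn1 /= (insubT (fun i => (i < fbound phi)%N) Ht') /= /il.
case: (boolP (odd t.+1)) => ot //.
rewrite /w; case: eqP => // h; exfalso.
by move: (odd_double_half t.+1); rewrite h (negbTE ot).
Qed.

End Dfn.

Section Compact.
Variables (L : language) (M : zmodType) (lt : M -> M -> Prop) (I : interp L M).
Hypothesis HM : ordered_abelian_group lt.
Hypothesis Hdc : definably_complete lt I.
Local Notation le := (le_of lt).
Local Notation Dfn := (Dfn lt I).

Lemma il_even (v q : nat -> M) n : il v q n.*2 = v n.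
Proof. by rewrite /il odd_double half_d. Qed.
Lemma il_odd (v q : nat -> M) n : il v q n.*2.+1 = q n.
Proof. by rewrite /il odd_dS half_dS. Qed.

Lemma Dfn_sat phi q : Dfn (fun v => sat lt I (il v q) phi).
Proof. by exists phi, q. Qed.

Lemma abs_lt_iff a c r : abs_lt lt (a - c) r <-> lt a (r + c) /\ lt c (r + a).
Proof.
rewrite /abs_lt -(ltDr_iff HM _ _ c) subrK -(ltDr_iff HM (- (a - c)) _ a) opprB subrK.
by [].
Qed.

Lemma Dfn_abs i j c : Dfn (fun v => abs_lt lt (v i - c) (v j)).
Proof.
apply: Dfn_ext (Dfn_sat (FAnd (FLt (TVar L i.*2) (TAdd (TVar L j.*2) (TVar L 1)))
   (FLt (TVar L 1) (TAdd (TVar L j.*2) (TVar L i.*2)))) (fun _ => c)) => v /=.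
by rewrite abs_lt_iff !il_even.
Qed.

Lemma Dfn_abs2 i j k : Dfn (fun v => abs_lt lt (v i - v j) (v k)).
Proof.
apply: Dfn_ext (Dfn_sat (FAnd (FLt (TVar L i.*2) (TAdd (TVar L k.*2) (TVar L j.*2)))
   (FLt (TVar L j.*2) (TAdd (TVar L k.*2) (TVar L i.*2)))) (fun _ => 0)) => v /=.
by rewrite abs_lt_iff !il_even.
Qed.

Lemma Dfn_abs3 i j c : Dfn (fun v => abs_lt lt (v i - v j) c).
Proof.
apply: Dfn_ext (Dfn_sat (FAnd (FLt (TVar L i.*2) (TAdd (TVar L 1) (TVar L j.*2)))
   (FLt (TVar L j.*2) (TAdd (TVar L 1) (TVar L i.*2)))) (fun _ => c)) => v /=.
by rewrite abs_lt_iff !il_even.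
Qed.

Lemma Dfn_pos i : Dfn (fun v => lt 0 (v i)).
Proof.
apply: Dfn_ext (Dfn_sat (FLt (TZero L) (TVar L i.*2)) (fun _ => 0)) => v /=.
by rewrite il_even.
Qed.

Lemma Dfn_ltc i c : Dfn (fun v => lt (v i) c).
Proof.
apply: Dfn_ext (Dfn_sat (FLt (TVar L i.*2) (TVar L 1)) (fun _ => c)) => v /=.
by rewrite il_even.
Qed.

Definition ovr (v w : nat -> M) (J : seq nat) : nat -> M :=
  fun i => if i \in J then w i else v i.

Lemma Dfn_exblock J P : Dfn P -> Dfn (fun v => exists w, P (ovr v w J)).
Proof.
move=> HP; elim: J => [|j J IH].
  by apply: Dfn_ext HP => v; split; [move=> h; exists v|case].
apply: Dfn_ext (Dfn_ex j IH) => v; split.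
- move=> [a [w Hw]]; exists (fun i => if i \in J then w i else a).
  suff -> : ovr v (fun i => if i \in J then w i else a) (j :: J) = ovr (upd v j a) w J by [].
  apply: functional_extensionality => i; rewrite /ovr /upd in_cons.
  by case: (i \in J); case: eqP; rewrite ?orbT.
- move=> [w Hw]; exists (w j), w.
  suff <- : ovr v w (j :: J) = ovr (upd v j (w j)) w J by [].
  apply: functional_extensionality => i; rewrite /ovr /upd in_cons.
  by case: (i \in J); case: eqP => [->|]; rewrite ?orbT.
Qed.

Definition ovx m (v : nat -> M) (x : 'I_m -> M) : nat -> M :=
  fun i => match i with
           | (S (S (S (S (S j))))) => oapp x (v i) (insub j)
           | _ => v i end.

Lemma ovx5 m v (x : 'I_m -> M) (i : 'I_m) : ovx v x i.+4.+1 = x i.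
Proof. by rewrite /ovx valK. Qed.

Lemma Dfn_exvec m P : Dfn P -> Dfn (fun v => exists x : 'I_m -> M, P (ovx v x)).
Proof.
move=> /(Dfn_exblock [seq j.+4.+1 | j <- iota 0 m]) H; apply: Dfn_ext H => v.
have E : forall w, ovr v w [seq j.+4.+1 | j <- iota 0 m] = ovx v (fun o : 'I_m => w o.+4.+1).
  move=> w; apply: functional_extensionality => i; rewrite /ovr /ovx.
  case: i => [|[|[|[|[|j]]]]] //=; try by case: ifP => // /mapP [? _].
  have inj5 : injective (fun j : nat => j.+4.+1) by move=> a b [].
  rewrite (mem_map inj5) mem_iota add0n /=.
  by case: insubP => [u ->|/negbTE ->] //= ->.
split=> -[w Hw].
  by exists (fun o : 'I_m => w o.+4.+1); rewrite -E.
exists (ovx v w); rewrite E.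
suff -> : (fun o : 'I_m => ovx v w o.+4.+1) = w by [].
by apply: functional_extensionality => o; rewrite ovx5.
Qed.

Definition enc m (B : M -> ('I_m -> M) -> Prop) : (nat -> M) -> Prop :=
  fun v => B (v 0%N) (fun i : 'I_m => v i.+4.+1).

Definition sw01 (i : nat) : nat := if i == 0%N then 1%N else if i == 1%N then 0%N else i.
Lemma sw01_inj : injective sw01.
Proof.
move=> a b; rewrite /sw01.
by case: a => [|[|a]]; case: b => [|[|b]].
Qed.

Lemma DfnT m (B : M -> ('I_m -> M) -> Prop) (kk : 'I_m) : Dfn (enc B) ->
  Dfn (fun v => exists r, lt 0 r /\ forall x, B r x -> le (v 0%N) (x kk)).
Proof.
move=> HB.
have Q1 : Dfn (fun v => B (v 1%N) (fun i => v i.+4.+1)).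
  by apply: Dfn_ext (Dfn_ren sw01_inj HB) => v.
have Q2 := Dfn_and Q1 (Dfn_not (Dfn_or (Dfn_lt lt I 0 kk.+4.+1) (Dfn_eq lt I 0 kk.+4.+1))).
have Q3 := Dfn_exvec m Q2.
have Q4 := Dfn_ex 1 (Dfn_and (Dfn_pos 1) (Dfn_not Q3)).
apply: Dfn_ext Q4 => v /=; rewrite /upd /=.
have E1 : forall (x : 'I_m -> M), (fun i : 'I_m => oapp x (v i.+4.+1) (insub (val i))) = x.
  by move=> x; apply: functional_extensionality => i; rewrite valK.
split.
- move=> [a [ha Hn]]; exists a; split => // x Hx.
  apply: NNPP => Hle; apply: Hn; exists x; rewrite E1 valK /=; split => //.
- move=> [r [hr H]]; exists r; split; first by [].
  move=> [x []]; rewrite E1 valK /= => Hx Hn; apply: Hn.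
  by apply: H.
Qed.

Lemma le_opp x y : le x y -> le (- y) (- x).
Proof. by move=> [h|->]; [left; apply: lt_opp|right]. Qed.

Lemma compact_fam m (R s0 : M) (hs0 : lt 0 s0) (B : M -> ('I_m -> M) -> Prop) :
  Dfn (enc B) ->
  (forall r, lt 0 r -> exists x, B r x) ->
  (forall r r' x, lt 0 r' -> le r' r -> B r' x -> B r x) ->
  (forall r x, B r x -> forall i, le (x i) R /\ le (- x i) R) ->
  exists c : 'I_m -> M, forall r, lt 0 r ->
    exists x, B r x /\ forall i, abs_lt lt (x i - c i) r.
Proof.
move=> HBd HBne HBmono HBbd.
have step : forall k, (k <= m)%N -> exists (c : 'I_m -> M) (B' : M -> ('I_m -> M) -> Prop),
  [/\ Dfn (enc B'), (forall r, lt 0 r -> exists x, B' r x),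
      (forall r r' x, lt 0 r' -> le r' r -> B' r' x -> B' r x) &
      (forall r x, B' r x -> B r x /\ forall i : 'I_m, (i < k)%N -> abs_lt lt (x i - c i) r)].
  elim=> [|k IH] hk.
    by exists (fun _ => 0), B; split => // r x h; split.
  case: (IH (ltnW hk)) => c [B' [HD Hne Hmo Hpr]].
  pose kk : 'I_m := Ordinal hk.
  pose T := fun y => exists r, lt 0 r /\ forall x, B' r x -> le y (x kk).
  have HT : definable1 lt I T.
    by apply: definable1_of_Dfn; apply: (DfnT kk HD).
  have Tub : forall y, T y -> le y R.
    move=> y [r [hr H]]; case: (Hne r hr) => x Hx.
    apply: (le_trans HM (H x Hx)); by case: (Hpr _ _ Hx) => /HBbd /(_ kk) [].
  have TmR : T (- R).
    exists s0; split => // x Hx; case: (Hpr _ _ Hx) => /HBbd /(_ kk) [_ h] _.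
    by move: (le_opp h); rewrite opprK.
  case: (Hdc HT) => [[hE|[hU|[c0 [Hc1 Hc2]]]] _].
  - by case: (hE _ TmR).
  - by case: (hU R) => y [/Tub hy hRy]; case: (lt_not_le HM hRy hy).
  exists (fun i => if i == kk then c0 else c i).
  exists (fun r x => B' r x /\ abs_lt lt (x kk - c0) r); split.
  - by apply: Dfn_and HD (Dfn_abs kk.+4.+1 0 c0).
  - move=> r hr.
    have [y [Ty hy]] : exists y, T y /\ lt (c0 - r) y.
      apply: NNPP => hn.
      have : le c0 (c0 - r).
        apply: Hc2 => y Ty; apply: (not_lt HM) => h; apply: hn; by exists y.
      apply: (lt_not_le HM); apply/(ltDr_iff HM _ _ r); rewrite subrK.
      by rewrite -{1}(add0r c0) addrC; apply: ltDl.
    case: Ty => r0 [hr0 Hr0].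
    case: (ex_min_pos HM hr hr0) => r' [hr' [h1 h2]].
    have [x [Hx hx]] : exists x, B' r' x /\ lt (x kk) (c0 + r).
      apply: NNPP => hn.
      have : le (c0 + r) c0.
        apply: Hc1; exists r'; split => // x Hx; apply: (not_lt HM) => h.
        by apply: hn; exists x.
      apply: (lt_not_le HM); rewrite -{1}(addr0 c0); exact: ltDl.
    exists x; split; first exact: Hmo h1 Hx.
    apply/abs_lt_iff; split; first by rewrite addrC.
    have := lt_le_trans HM hy (Hr0 x (Hmo _ _ _ hr' h2 Hx)).
    by move/(ltDr HM r); rewrite subrK addrC.
  - by move=> r r' x hr' hle [Hx Ha]; split; [apply: Hmo Hx|apply: abs_lt_le Ha hle].
  - move=> r x [Hx Ha]; case: (Hpr _ _ Hx) => HB Hi; split => // i hi.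
    case: eqP => [->|ne] //; apply: Hi.
    rewrite ltnS leq_eqVlt in hi; case/orP: hi => // /eqP hi.
    by case: ne; apply: val_inj.
case: (step m (leqnn m)) => c [B' [_ Hne _ Hpr]].
exists c => r hr; case: (Hne r hr) => x Hx; case: (Hpr _ _ Hx) => HB Hi.
by exists x; split => // i; apply: Hi.
Qed.

End Compact.

Lemma box_delta (M : zmodType) (lt : M -> M -> Prop) (HM : ordered_abelian_group lt)
  (d0 : M) (hd0 : lt 0 d0) (l u : option M) (a : M) :
  in_oint lt l u a -> exists d, lt 0 d /\ forall d', lt 0 d' -> le_of lt d' d ->
    forall y, abs_lt lt (y - a) d' -> in_oint lt l u y.
Proof.
move=> [hl hu].
have [d1 [hd1 H1]] : exists d1, lt 0 d1 /\ forall d', lt 0 d' -> le_of lt d' d1 ->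
    forall y, abs_lt lt (y - a) d' -> (if l is Some b then lt b y else True).
  case: l hl => [b|] hb; last by exists d0.
  exists (a - b); split; first by apply/(lt_subr HM).
  move=> d' hd' hle y /(abs_lt_iff HM) [_ h].
  have := lt_le_trans HM h (le_add2 HM hle (le_refl _ y)).
  move/(ltDr HM (b - a)).
  have -> : a + (b - a) = b by rewrite addrC subrK.
  by rewrite [a - b + y]addrC -addrA [X in y + X]addrA subrK subrr addr0.
have [d2 [hd2 H2]] : exists d2, lt 0 d2 /\ forall d', lt 0 d' -> le_of lt d' d2 ->
    forall y, abs_lt lt (y - a) d' -> (if u is Some b then lt y b else True).
  case: u hu => [b|] hb; last by exists d0.
  exists (b - a); split; first by apply/(lt_subr HM).
  move=> d' hd' hle y /(abs_lt_iff HM) [h _].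
  by have := lt_le_trans HM h (le_add2 HM hle (le_refl _ a)); rewrite subrK.
case: (ex_min_pos HM hd1 hd2) => d [hd [h1 h2]].
exists d; split => // d' hd' hle y hy; split.
  by apply: H1 hy => //; exact: (le_trans HM hle h1).
by apply: H2 hy => //; exact: (le_trans HM hle h2).
Qed.

Lemma fin_min (M : zmodType) (lt : M -> M -> Prop) (HM : ordered_abelian_group lt)
  (d0 : M) (hd0 : lt 0 d0) n (P : 'I_n -> M -> Prop) :
  (forall i, exists d, lt 0 d /\ forall d', lt 0 d' -> le_of lt d' d -> P i d') ->
  exists d, lt 0 d /\ forall i, P i d.
Proof.
move=> H.
suff : forall sq : seq 'I_n, exists d, lt 0 d /\ forall d', lt 0 d' -> le_of lt d' d ->
    forall i, i \in sq -> P i d'.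
  move=> /(_ (ord_enum n)) [d [hd Hd]]; exists d; split => // i.
  by apply: Hd => //; [right|rewrite mem_ord_enum].
elim=> [|i sq [d [hd Hd]]]; first by exists d0.
case: (H i) => di [hdi Hdi].
case: (ex_min_pos HM hd hdi) => e [he [h1 h2]].
exists e; split => // d' hd' hle j; rewrite in_cons => /orP [/eqP ->|hj].
  by apply: Hdi => //; exact: (le_trans HM hle h2).
by apply: Hd => //; exact: (le_trans HM hle h1).
Qed.

Lemma tele (M : zmodType) (a b c d : M) : (a - b) + (b - c) + (c - d) = a - d.
Proof. by rewrite (addrA (a - b)) subrK (addrA (a - c)) subrK. Qed.

Lemma sig_inj m (p q : nat) : p != q -> (p < 5)%N -> (q < 5)%N ->
  injective (fun j : 'I_(m+2) => if (val j < m)%N then (val j).+4.+1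
                                 else if val j == m then p else q).
Proof.
move=> /eqP pq hp hq [a ha] [b hb] /= E; apply: val_inj => /=; move: E.
case: (ltnP a m) => ha1; case: (ltnP b m) => hb1; case: (a =P m) => ea; case: (b =P m) => eb; lia.
Qed.

Theorem mainTheorem1 (L : language) (M : zmodType) (lt : M -> M -> Prop)
  (I : interp L M)
  (HM : ordered_abelian_group lt)
  (Hdc : definably_complete lt I)
  (Hlom : locally_o_minimal lt I)
  (m : nat) (C : ('I_m -> M) -> Prop)
  (HCdef : definable lt I C) (HCcl : closed_set lt C) (HCbd : bounded_set lt C)
  (s : M) (Hs : lt 0 s)
  (F : ('I_m -> M) -> M -> M)
  (HFdef : definable_family lt I C s F)
  (HFpc : pointwise_convergent lt C s F)
  (HFeq : equicontinuous_family lt C s F) :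
  uniformly_convergent lt C s F.
Proof.
move=> eps heps.
case: (three_lemma HM heps) => e [he He].
apply: NNPP => Hnot.
pose B := fun r (x : 'I_m -> M) => C x /\ exists t t', lt 0 t /\ lt t r /\ lt t s /\ lt 0 t' /\
   lt t' r /\ lt t' s /\ ~ abs_lt lt (F x t - F x t') eps.
have Hne : forall r, lt 0 r -> exists x, B r x.
  move=> r hr; apply: NNPP => hn; apply: Hnot; exists r; split => // x t t' Cx ht1 ht2 ht3 ht4 ht5 ht6.
  by apply: NNPP => ha; apply: hn; exists x; split => //; exists t, t'; do !split.
have Hmo : forall r r' x, lt 0 r' -> le_of lt r' r -> B r' x -> B r x.
  move=> r r' x _ hle [Cx [t [t' [h1 [h2 [h3 [h4 [h5 [h6 h7]]]]]]]]]; split => //; exists t, t'.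
  by do !split => //; apply: (lt_le_trans HM _ hle).
case: HCbd => R HR.
have Hbd : forall r x, B r x -> forall i, le_of lt (x i) R /\ le_of lt (- x i) R.
  by move=> r x [Cx _]; apply: HR.
have HBd : Dfn lt I (enc B).
  pose s1 := fun j : 'I_(m+2) => if (val j < m)%N then (val j).+4.+1
                                 else if val j == m then 1%N else 3%N.
  pose s2 := fun j : 'I_(m+2) => if (val j < m)%N then (val j).+4.+1
                                 else if val j == m then 2%N else 4%N.
  have G1 := Dfn_of_definable (@sig_inj m 1 3 isT isT isT) HFdef.
  have G2 := Dfn_of_definable (@sig_inj m 2 4 isT isT isT) HFdef.
  have e3 : forall i : 'I_m, (val (lshift 2 i) < m)%N by move=> i /=.
  have e1 : (val (rshift m (ord0 : 'I_2)) < m)%N = false /\ val (rshift m (ord0 : 'I_2)) == m.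
    by rewrite /= addn0 ltnn eqxx.
  have e2 : (val (rshift m (ord_max : 'I_2)) < m)%N = false /\ (val (rshift m (ord_max : 'I_2)) == m) = false.
    by rewrite /=; split; apply/negbTE; lia.
  have Hx : forall v : nat -> M, (fun i : 'I_m => v (if (val (lshift 2 i) < m)%N then (val (lshift 2 i)).+4.+1
                                 else if val (lshift 2 i) == m then 1%N else 3%N)) = (fun i => v i.+4.+1).
    by move=> v; apply: functional_extensionality => i; rewrite e3.
  have Hx2 : forall v : nat -> M, (fun i : 'I_m => v (if (val (lshift 2 i) < m)%N then (val (lshift 2 i)).+4.+1
                                 else if val (lshift 2 i) == m then 2%N else 4%N)) = (fun i => v i.+4.+1).
    by move=> v; apply: functional_extensionality => i; rewrite e3.
  have G1' : Dfn lt I (fun v => [/\ C (fun i => v i.+4.+1), lt 0 (v 1%N), lt (v 1%N) s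
                         & v 3%N = F (fun i => v i.+4.+1) (v 1%N)]).
    apply: Dfn_ext G1 => v /=; rewrite Hx; case: e1 => -> ->; case: e2 => -> ->; by [].
  have G2' : Dfn lt I (fun v => [/\ C (fun i => v i.+4.+1), lt 0 (v 2%N), lt (v 2%N) s
                         & v 4%N = F (fun i => v i.+4.+1) (v 2%N)]).
    apply: Dfn_ext G2 => v /=; rewrite Hx2; case: e1 => -> ->; case: e2 => -> ->; by [].
  have P := Dfn_and G1' (Dfn_and G2' (Dfn_and (Dfn_lt lt I 1 0) (Dfn_and (Dfn_lt lt I 2 0)
              (Dfn_not (Dfn_abs3 I HM 3 4 eps))))).
  have Q := Dfn_ex 1 (Dfn_ex 2 (Dfn_ex 3 (Dfn_ex 4 P))).
  apply: Dfn_ext Q => v; rewrite /upd /enc /B /=; split.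
  - move=> [a [b [c [d [[Cx ha1 ha2 ha3] [[_ hb1 hb2 hb3] [h1 [h2 h3]]]]]]]].
    split => //; exists a, b; rewrite -ha3 -hb3; by do !split.
  - move=> [Cx [t [t' [h1 [h2 [h3 [h4 [h5 [h6 h7]]]]]]]]].
    exists t, t', (F (fun i => v i.+4.+1) t), (F (fun i => v i.+4.+1) t').
    by do !split.
case: (compact_fam HM Hdc Hs HBd Hne Hmo Hbd) => c Hc.
have Cc : C c.
  apply: NNPP => nC; case: (HCcl c nC) => l [u [Hin Hout]].
  case: (fin_min HM Hs (P := fun i d => forall y, abs_lt lt (y - c i) d -> in_oint lt (l i) (u i) y)).
    by move=> i; exact: (box_delta HM Hs (Hin i)).
  move=> d [hd Hd]; case: (Hc d hd) => x [[Cx _] Hx].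
  by apply: (Hout x) => // i; apply: Hd.
case: (HFeq e he c Cc) => delta [hdelta Hdelta].
case: (HFpc e he c Cc) => s0 [hs0 Hs0].
case: (ex_min_pos HM hs0 hdelta) => r [hr [h1 h2]].
case: (Hc r hr) => x [[Cx [t [t' [ht1 [ht2 [ht3 [ht4 [ht5 [ht6 hbad]]]]]]]]] Hx].
apply: hbad.
have hv : vabs_lt lt (fun i => c i - x i) delta.
  move=> i /=; apply: (abs_lt_le HM _ h2); apply/abs_lt_sub; exact: Hx.
rewrite -(tele (F x t) (F c t) (F c t') (F x t')).
apply: He.
- by apply/abs_lt_sub; apply: Hdelta.
- by apply: Hs0 => //; apply: (lt_le_trans HM _ h1).
- by apply: Hdelta.
Qed.
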